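(* Let $p$ be a prime, $A$ a torsion-free $\mathbb{Z}_{(p)}$-algebra, $\mathfrak a\subseteq A$ a divided-power ideal, $P,Q\in A[X]$ monic, and $N\ge1$. If $e_n(P)\equiv e_n(Q)\pmod{\mathfrak a}$ for all $1\le n\le N$, then $p_N(P)\equiv p_N(Q)\pmod{N\mathfrak a}$.
   Context: An ideal $\mathfrak a$ of a torsion-free $\mathbb{Z}_{(p)}$-algebra $A$ is a divided-power ideal if $a^p\in p\,\mathfrak a$ for all $a\in\mathfrak a$ (equivalently $a^k/k!\in\mathfrak a$ in $A\otimes\mathbb{Q}$ for all $a\in\mathfrak a$, $k\ge1$). For a monic $P=X^d+a_1X^{d-1}+\dots+a_d\in A[X]$: $e_0(P)=1$, $e_n(P)=(-1)^na_n$ for $1\le n\le d$, $e_n(P)=0$ for $n>d$; and $p_n(P)$ for $n\ge1$ is defined by Newton's identities $p_n(P)=\sum_{i=1}^{n-1}(-1)^{i-1}e_i(P)p_{n-i}(P)+(-1)^{n-1}n\,e_n(P)$ (for $A$ a domain, the $n$-th power sum of the roots of $P$ with multiplicity). $N\mathfrak a=\{Na:a\in\mathfrak a\}$. *)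

(* Defs.v *)
From HB Require Import structures.
From mathcomp Require Import all_boot all_order all_algebra.
Set Implicit Arguments. Unset Strict Implicit. Unset Printing Implicit Defensive.
Import GRing.Theory.
Local Open Scope ring_scope.

(* A (commutative) ring A is a Z_(p)-algebra iff every integer prime to p
   is invertible in A (the structure map Z_(p) -> A is then unique). *)
Definition Zp_local_algebra (p : nat) (A : comNzRingType) : Prop :=
  forall n : nat, coprime n p -> exists y : A, n%:R * y = 1.

Definition torsion_free (A : comNzRingType) : Prop :=
  forall (n : nat) (x : A), (0 < n)%N -> x *+ n = 0 -> x = 0.

Definition is_ideal (A : comNzRingType) (I : {pred A}) : Prop :=
  [/\ 0 \in I,
      (forall x y, x \in I -> y \in I -> x + y \in I) &
      (forall r x, x \in I -> r * x \in I)].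

Definition nat_mul_set (A : comNzRingType) (N : nat) (I : {pred A}) (x : A) : Prop :=
  exists2 y, y \in I & x = y *+ N.

Definition dp_ideal (p : nat) (A : comNzRingType) (I : {pred A}) : Prop :=
  is_ideal I /\ forall a, a \in I -> nat_mul_set p I (a ^+ p).

(* e_n(P) for monic P of degree d = size P - 1: P = X^d + a_1 X^(d-1) + ... + a_d,
   a_n = P`_(d - n); e_0 = 1, e_n = (-1)^n a_n for 1 <= n <= d, e_n = 0 for n > d. *)
Definition elem_sym (A : comNzRingType) (P : {poly A}) (n : nat) : A :=
  if n == 0%N then 1
  else if (n <= (size P).-1)%N then (-1) ^+ n * P`_((size P).-1 - n)
  else 0.

(* Newton step: given s = [:: p_1; ...; p_(n-1)], compute p_n. *)
Definition newton_step (A : comNzRingType) (P : {poly A}) (s : seq A) (n : nat) : A :=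
  \sum_(1 <= i < n) (-1) ^+ (i.-1) * elem_sym P i * nth 0 s (n - i).-1
  + (-1) ^+ (n.-1) * (elem_sym P n *+ n).

Fixpoint psums (A : comNzRingType) (P : {poly A}) (n : nat) : seq A :=
  match n with
  | 0 => [::]
  | n'.+1 => rcons (psums P n') (newton_step P (psums P n') n)
  end.

Definition psum (A : comNzRingType) (P : {poly A}) (n : nat) : A :=
  nth 0 (psums P n) n.-1.

(* Main.v *)
Require Import Defs.
From mathcomp Require Import all_boot all_order all_algebra.
From mathcomp Require Import zify ring.
Set Implicit Arguments. Unset Strict Implicit. Unset Printing Implicit Defensive.
Import GRing.Theory.
Local Open Scope ring_scope.

Lemma fact_inner (p q : nat) : prime p -> forall j, (j < p)%N ->
  exists t, coprime t p /\ (p * q + j)`! = ((p * q)`! * t)%N.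
Proof.
move=> pp; elim=> [|j IH] Hj.
  by exists 1%N; rewrite addn0 muln1 coprime1n.
have [t [ct Et]] := IH (ltnW Hj).
exists ((p * q + j.+1) * t)%N; split.
  rewrite coprimeMl ct andbT coprime_sym prime_coprime //.
  by rewrite (dvdn_addr _ (dvdn_mulr q (dvdnn p))) gtnNdvd.
by rewrite addnS factS Et mulnCA.
Qed.

Lemma fact_p (p : nat) : prime p -> forall q,
  exists s, coprime s p /\ (p * q)`! = (p ^ q * q`! * s)%N.
Proof.
move=> pp; have p0 := prime_gt0 pp.
elim=> [|q [s [cs Es]]]; first by exists 1%N; rewrite muln0 coprime1n.
have [t [ct Et]] := fact_inner q pp (j := p.-1) ltac:(lia).
exists (s * t)%N; split; first by rewrite coprimeMl cs ct.
have -> : (p * q.+1 = (p * q + p.-1).+1)%N by rewrite mulnS; lia.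
rewrite factS Et Es factS expnS.
have -> : ((p * q + p.-1).+1 = p * q.+1)%N by rewrite mulnS; lia.
ring.
Qed.


Lemma I_mulrn (A : comNzRingType) (I : {pred A}) : is_ideal I ->
  forall x n, x \in I -> x *+ n \in I.
Proof. by case=> _ _ hM x n hx; rewrite -mulr_natl hM. Qed.

Lemma I_opp (A : comNzRingType) (I : {pred A}) : is_ideal I ->
  forall x, x \in I -> - x \in I.
Proof. by case=> _ _ hM x hx; rewrite -mulN1r hM. Qed.

Lemma I_sum (A : comNzRingType) (I : {pred A}) : is_ideal I ->
  forall (J : Type) (r : seq J) (F : J -> A), (forall j, F j \in I) -> \sum_(j <- r) F j \in I.
Proof.
case=> h0 hD _ J r F hF; elim: r => [|a r IH]; first by rewrite big_nil.
by rewrite big_cons hD.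
Qed.

Lemma S_0 (A : comNzRingType) (I : {pred A}) m : is_ideal I -> nat_mul_set m I 0.
Proof. by case=> h0 _ _; exists 0; rewrite ?mul0rn. Qed.

Lemma S_add (A : comNzRingType) (I : {pred A}) m x y : is_ideal I ->
  nat_mul_set m I x -> nat_mul_set m I y -> nat_mul_set m I (x + y).
Proof.
case=> _ hD _ [a ha ->] [b hb ->]; exists (a + b); first exact: hD.
by rewrite mulrnDl.
Qed.

Lemma S_opp (A : comNzRingType) (I : {pred A}) m x : is_ideal I ->
  nat_mul_set m I x -> nat_mul_set m I (- x).
Proof.
move=> hI [a ha ->]; exists (- a); first exact: I_opp.
by rewrite mulNrn.
Qed.

Lemma S_sum (A : comNzRingType) (I : {pred A}) m : is_ideal I ->
  forall (J : Type) (r : seq J) (F : J -> A), (forall j, nat_mul_set m I (F j)) ->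
  nat_mul_set m I (\sum_(j <- r) F j).
Proof.
move=> hI J r F hF; elim: r => [|a r IH]; first by rewrite big_nil; apply: S_0.
by rewrite big_cons; apply: S_add.
Qed.

Lemma S_mull (A : comNzRingType) (I : {pred A}) m r x : is_ideal I ->
  nat_mul_set m I x -> nat_mul_set m I (r * x).
Proof.
case=> _ _ hM [a ha ->]; exists (r * a); first exact: hM.
by rewrite mulrnAr.
Qed.

Lemma S_mulrn (A : comNzRingType) (I : {pred A}) m k x :
  nat_mul_set m I x -> nat_mul_set (m * k)%N I (x *+ k).
Proof. case=> a ha ->; exists a => //; by rewrite mulrnA. Qed.

Lemma S_mul (A : comNzRingType) (I : {pred A}) a b x y : is_ideal I ->
  nat_mul_set a I x -> nat_mul_set b I y -> nat_mul_set (a * b)%N I (x * y).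
Proof.
case=> _ _ hM [u hu ->] [v hv ->]; exists (u * v); first exact: hM.
by rewrite mulrnAl mulrnAr -mulrnA mulnC.
Qed.

Lemma S_weak (A : comNzRingType) (I : {pred A}) p a b s x : is_ideal I ->
  Zp_local_algebra p A -> coprime s p -> (b %| a * s)%N ->
  nat_mul_set a I x -> nat_mul_set b I x.
Proof.
move=> hI hL cs /dvdnP [w Ew] [y hy ->].
have [z Ez] := hL s cs.
exists ((y * z) *+ w).
  by apply: I_mulrn => //; case: hI => _ _ hM; rewrite mulrC hM.
by rewrite -mulrnA -Ew mulnC mulrnA -mulrnAr -mulr_natl Ez mulr1.
Qed.

Lemma dp_pow (p : nat) (A : comNzRingType) (I : {pred A}) :
  prime p -> Zp_local_algebra p A -> dp_ideal p I ->
  forall c, c \in I -> forall k, (0 < k)%N -> nat_mul_set k`! I (c ^+ k).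
Proof.
move=> pp hL [hI hdp] c0 hc0 k0.
elim: k0 {-2}k0 (leqnn k0) c0 hc0 => [|n IH] k Hk c hc k0; first lia.
case: (leqP k n) => Hkn; first exact: IH.
have -> : k = n.+1 by lia.
have p1 := prime_gt1 pp.
case: (boolP (p %| n.+1)%N) => hp.
  have [q Eq] := dvdnP hp.
  have q0 : (0 < q)%N by move: Eq; case: q => //; lia.
  have [s [cs Es]] := fact_p pp q.
  have [z hz Ez] := hdp c hc.
  have [w hw Ew] := IH q ltac:(nia) z hz q0.
  rewrite Eq mulnC exprM Ez exprMn_n Ew -mulrnA.
  apply: (S_weak (s := s) hI hL cs); last by exists w.
  by rewrite Es [(q`! * _)%N]mulnC.
case: n IH Hk Hkn hp => [|n] IH Hk Hkn hp.
  by exists c; rewrite ?expr1.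
have [y hy Ey] := IH n.+1 (leqnn _) c hc isT.
rewrite exprS Ey.
apply: (S_weak (s := n.+2) hI hL).
- by rewrite coprime_sym prime_coprime.
- by rewrite factS mulnC.
by case: hI => _ _ hM; exists (c * y); rewrite ?hM ?mulrnAr.
Qed.


Definition Sp (A : comNzRingType) (I : {pred A}) (m : nat) (q : {poly A}) :=
  forall n, nat_mul_set m I q`_n.

Lemma Sp_mul (A : comNzRingType) (I : {pred A}) a b q r : is_ideal I ->
  Sp I a q -> Sp I b r -> Sp I (a * b)%N (q * r).
Proof.
move=> hI hq hr n; rewrite coefM; apply: S_sum => // j.
exact: S_mul.
Qed.

Lemma Sp_C (A : comNzRingType) (I : {pred A}) m c : is_ideal I ->
  nat_mul_set m I c -> Sp I m c%:P.
Proof. by move=> hI hc n; rewrite coefC; case: eqP => _ //; apply: S_0. Qed.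

Lemma Sp_mulXn (A : comNzRingType) (I : {pred A}) m q i : is_ideal I ->
  Sp I m q -> Sp I m (q * 'X^i).
Proof. by move=> hI hq n; rewrite coefMXn; case: ifP => _ //; apply: S_0. Qed.

Lemma Sp_mulrn (A : comNzRingType) (I : {pred A}) m k q :
  Sp I m q -> Sp I (m * k)%N (q *+ k).
Proof. by move=> hq n; rewrite coefMn; apply: S_mulrn. Qed.

Lemma Sp_sum (A : comNzRingType) (I : {pred A}) m : is_ideal I ->
  forall (J : Type) (r : seq J) (F : J -> {poly A}), (forall j, Sp I m (F j)) ->
  Sp I m (\sum_(j <- r) F j).
Proof. by move=> hI J r F hF n; rewrite coef_sum; apply: S_sum => // j; apply: hF. Qed.

Lemma pow_S (p : nat) (A : comNzRingType) (I : {pred A}) :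
  prime p -> Zp_local_algebra p A -> dp_ideal p I ->
  forall q : {poly A}, (forall i, q`_i \in I) ->
  forall k, (0 < k)%N -> Sp I k`! (q ^+ k).
Proof.
move=> pp hL hdp; have hI := hdp.1.
elim/poly_ind => [|r c IH] hq k k0.
  by rewrite expr0n gtn_eqF // => n; rewrite coef0; apply: S_0.
have hc : c \in I by move: (hq 0%N); rewrite coefD coefMX coefC /= add0r.
have hr : forall i, r`_i \in I.
  by move=> i; move: (hq i.+1); rewrite coefD coefMX coefC /= addr0.
have IHr := IH hr.
rewrite addrC exprDn; apply: Sp_sum => // -[i /= Hi].
rewrite -polyC_exp exprMn.
case: (eqVneq i 0%N) => [->|i0].
  rewrite subn0 !expr0 !mulr1 bin0 -(muln1 k`!); apply: Sp_mulrn.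
  by apply: Sp_C => //; apply: (dp_pow pp hL hdp).
case: (eqVneq i k) => [->|ik].
  rewrite subnn expr0 mul1r binn -(muln1 k`!); apply: Sp_mulrn.
  by apply: Sp_mulXn => //; apply: IHr.
rewrite -(bin_fact (m := i)) ?mulnA; last lia.
have -> : ('C(k, i) * i`! * (k - i)`! = ((k - i)`! * i`!) * 'C(k, i))%N by ring.
apply: Sp_mulrn; apply: Sp_mul => //.
  by apply: Sp_C => //; apply: (dp_pow pp hL hdp); lia.
by apply: Sp_mulXn => //; apply: IHr; lia.
Qed.


Definition cong (A : comNzRingType) (M : nat) (p q : {poly A}) :=
  exists r, p = q + r * 'X^M.

Definition theta (A : comNzRingType) (p : {poly A}) := 'X * p^`().


Lemma cong_refl (A : comNzRingType) M (p : {poly A}) : cong M p p.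
Proof. by exists 0; rewrite mul0r addr0. Qed.

Lemma cong_eq (A : comNzRingType) M (p q : {poly A}) : p = q -> cong M p q.
Proof. by move=> ->; apply: cong_refl. Qed.

Lemma cong_sym (A : comNzRingType) M (p q : {poly A}) : cong M p q -> cong M q p.
Proof. by case=> r ->; exists (- r); rewrite mulNr addrK. Qed.

Lemma cong_trans (A : comNzRingType) M (p q s : {poly A}) :
  cong M p q -> cong M q s -> cong M p s.
Proof. by case=> r -> [t ->]; exists (t + r); rewrite mulrDl addrA. Qed.

Lemma cong_add (A : comNzRingType) M (p q p' q' : {poly A}) :
  cong M p q -> cong M p' q' -> cong M (p + p') (q + q').
Proof. by case=> r -> [t ->]; exists (r + t); ring. Qed.

Lemma cong_mul (A : comNzRingType) M (p q p' q' : {poly A}) :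
  cong M p q -> cong M p' q' -> cong M (p * p') (q * q').
Proof. by case=> r -> [t ->]; exists (r * q' + q * t + r * t * 'X^M); ring. Qed.

Lemma cong_opp (A : comNzRingType) M (p q : {poly A}) :
  cong M p q -> cong M (- p) (- q).
Proof. by case=> r ->; exists (- r); ring. Qed.

Lemma theta_mul (A : comNzRingType) (p q : {poly A}) :
  theta (p * q) = theta p * q + p * theta q.
Proof. by rewrite /theta derivM; ring. Qed.

Lemma theta_add (A : comNzRingType) (p q : {poly A}) :
  theta (p + q) = theta p + theta q.
Proof. by rewrite /theta derivD mulrDr. Qed.

Lemma theta_opp (A : comNzRingType) (p : {poly A}) : theta (- p) = - theta p.
Proof. by rewrite /theta derivN mulrN. Qed.

Lemma theta1 (A : comNzRingType) : theta (1 : {poly A}) = 0.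
Proof. by rewrite /theta -polyC1 derivC mulr0. Qed.

Lemma coef_theta (A : comNzRingType) (p : {poly A}) n : (theta p)`_n = p`_n *+ n.
Proof. by rewrite /theta coefXM; case: n => [|n] //=; rewrite coef_deriv. Qed.

Lemma theta_Xn (A : comNzRingType) M : theta ('X^M : {poly A}) = 'X^M *+ M.
Proof.
rewrite /theta derivXn; case: M => [|M]; first by rewrite !mulr0n mulr0.
by rewrite /= mulrnAr -exprS.
Qed.

Lemma cong_theta (A : comNzRingType) M (p q : {poly A}) :
  cong M p q -> cong M (theta p) (theta q).
Proof.
case=> r ->; exists (theta r + r *+ M).
rewrite theta_add theta_mul theta_Xn; ring.
Qed.

Lemma cong_coef (A : comNzRingType) M (p q : {poly A}) n :
  cong M p q -> (n < M)%N -> p`_n = q`_n.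
Proof. by case=> r -> hn; rewrite coefD coefMXn hn addr0. Qed.

Lemma coef_cong (A : comNzRingType) M (p q : {poly A}) :
  (forall n, (n < M)%N -> p`_n = q`_n) -> cong M p q.
Proof.
move=> h; exists (drop_poly M (p - q)).
have Ht : take_poly M (p - q) = 0.
  apply/polyP => i; rewrite coef_take_poly coef0 coefB.
  by case: ifP => // /h ->; rewrite subrr.
have E := poly_take_drop M (p - q); rewrite Ht add0r in E.
by rewrite E addrC subrK.
Qed.


Lemma size_psums (A : comNzRingType) (P : {poly A}) n : size (psums P n) = n.
Proof. by elim: n => //= n IH; rewrite size_rcons IH. Qed.

Lemma nth_psums (A : comNzRingType) (P : {poly A}) m k :
  (k < m)%N -> nth 0 (psums P m) k = psum P k.+1.
Proof.
elim: m => // m IH hk; rewrite /= nth_rcons size_psums.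
case: (ltngtP k m) => hkm.
- by rewrite IH.
- lia.
- by subst k; rewrite /psum /= nth_rcons size_psums ltnn eqxx.
Qed.

Lemma psumS (A : comNzRingType) (P : {poly A}) n :
  psum P n.+1 = newton_step P (psums P n) n.+1.
Proof. by rewrite /psum /= nth_rcons size_psums ltnn eqxx. Qed.

Lemma psum0 (A : comNzRingType) (P : {poly A}) : psum P 0 = 0.
Proof. by []. Qed.

Lemma newton_id (A : comNzRingType) (P : {poly A}) n :
  \sum_(j < n.+1) ((-1) ^+ j * elem_sym P j) * psum P (n - j) =
  - (((-1) ^+ n * elem_sym P n) *+ n).
Proof.
case: n => [|m].
  by rewrite big_ord_recl big_ord0 psum0 !mulr0n mulr0 oppr0 addr0.
rewrite big_ord_recl subn0 psumS /newton_step big_ord_recr /= subnn psum0 mulr0 addr0.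
rewrite big_add1 /= big_mkord.
have -> : \sum_(i < m) (-1) ^+ i * elem_sym P i.+1 * nth 0 (psums P m) (m.+1 - i.+1).-1
   = \sum_(i < m) (-1) ^+ i * elem_sym P i.+1 * psum P (m - i).
  apply: eq_bigr => i _; rewrite subSS nth_psums; last by have := ltn_ord i; lia.
  by congr (_ * psum P _); have := ltn_ord i; lia.
have -> : \sum_(i < m) (-1) ^+ (bump 0 i) * elem_sym P (bump 0 i) * psum P (m.+1 - bump 0 i)
  = - \sum_(i < m) (-1) ^+ i * elem_sym P i.+1 * psum P (m - i).
  rewrite -sumrN; apply: eq_bigr => i _.
  by rewrite /bump /= add1n subSS exprS; ring.
have e0 : elem_sym P 0 = 1 by [].
rewrite e0 expr0 !mul1r exprS.
move: (\sum_(i < m) _) (elem_sym P m.+1) => S e.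
ring.
Qed.


Lemma inv_trunc (A : comNzRingType) (G : {poly A}) : G`_0 = 1 ->
  forall M, exists u, cong M (G * u) 1.
Proof.
move=> G0 M.
suff [u hu] : exists u, forall n, (n < M)%N -> (G * u)`_n = (n == 0%N)%:R.
  by exists u; apply: coef_cong => n hn; rewrite hu // coef1.
elim: M => [|M [u hu]]; first by exists 0.
exists (u + ((M == 0%N)%:R - (G * u)`_M)%:P * 'X^M) => n hn.
rewrite mulrDr mulrCA coefD coefCM coefMXn.
case: (ltngtP n M) => hnM.
- by rewrite hu // mulr0 addr0.
- lia.
- by subst n; rewrite subnn G0 mulr1 addrC subrK.
Qed.


Definition gpol (A : comNzRingType) (P : {poly A}) M :=
  \poly_(i < M) ((-1) ^+ i * elem_sym P i).
Definition ppol (A : comNzRingType) (P : {poly A}) M :=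
  \poly_(i < M) psum P i.

Lemma newton_cong (A : comNzRingType) (P : {poly A}) M :
  cong M (gpol P M * ppol P M) (- theta (gpol P M)).
Proof.
apply: coef_cong => n hn; rewrite coefM coefN coef_theta /gpol coef_poly hn.
rewrite -newton_id; apply: eq_bigr => j _; rewrite !coef_poly.
have hj := ltn_ord j.
by rewrite ifT ?ifT //; lia.
Qed.

Lemma cong_rw (A : comNzRingType) M (p q p' q' : {poly A}) :
  p = p' -> q = q' -> cong M p' q' -> cong M p q.
Proof. by move=> -> ->. Qed.


Unset Implicit Arguments.

Theorem proposition2p9 (p : nat) (A : comNzRingType) (I : {pred A})
    (P Q : {poly A}) (N : nat) :
  prime p -> Zp_local_algebra p A -> torsion_free A -> dp_ideal p I ->
  P \is monic -> Q \is monic -> (1 <= N)%N ->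
  (forall n : nat, (1 <= n <= N)%N -> elem_sym P n - elem_sym Q n \in I) ->
  nat_mul_set N I (psum P N - psum Q N).
Proof.
move=> pp hL hT hdp _ _ N1 hPQ.
have hI := hdp.1.
have [hI0 hID hIM] := hI.
set M := N.+1.
set g := gpol P M; set h := gpol Q M; set pe := ppol P M; set pf := ppol Q M.
have g0 : g`_0 = 1 by rewrite /g /gpol coef_poly /= mul1r.
have h0 : h`_0 = 1 by rewrite /h /gpol coef_poly /= mul1r.
have [u hu] := inv_trunc g0 M.
set E := take_poly M (1 - h * u).
have hE : cong M (h * u) (1 - E).
  exists (- drop_poly M (1 - h * u)).
  have T := poly_take_drop M (1 - h * u).
  have -> : 1 - E + - drop_poly M (1 - h * u) * 'X^M
          = 1 - (E + drop_poly M (1 - h * u) * 'X^M) by ring.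
  by rewrite T; ring.
have gu0 : u`_0 = 1.
  by have := cong_coef (n := 0) hu isT; rewrite coef0M g0 mul1r coef1.
have E0 : E`_0 = 0 by rewrite coef_take_poly coefB coef1 coef0M h0 gu0 mulr1 subrr.
have EI : forall i, E`_i \in I.
  move=> i; rewrite coef_take_poly; case: ifP => hi //.
  have -> : 1 - h * u = (1 - g * u) + (g - h) * u by ring.
  rewrite coefD coefB (cong_coef hu hi) subrr add0r coefM.
  apply: I_sum => // j; rewrite mulrC; apply hIM.
  rewrite coefB /g /h /gpol !coef_poly; case: ifP => hj; last by rewrite subrr.
  case: (nat_of_ord j) hj => [|j'] hj; first by rewrite subrr.
  rewrite -mulrBr; apply hIM; apply hPQ; lia.
have EM : cong M (E ^+ M) 0.
  have T := poly_take_drop 1 E.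
  have Ht : take_poly 1 E = 0.
    by apply/polyP => i; rewrite coef_take_poly coef0; case: i => [|i] //=; rewrite E0.
  rewrite Ht add0r expr1 in T.
  exists (drop_poly 1 E ^+ M); rewrite add0r.
  by rewrite -{1}T exprMn.
set W := \sum_(k < M) E ^+ k.
have hW : cong M ((1 - E) * W) 1.
  have H := subrX1 E M.
  have -> : (1 - E) * W = 1 - (E ^+ M) by rewrite -[1 - E]opprB mulNr -H opprB.
  by have := cong_add (cong_refl M 1) (cong_opp EM); rewrite oppr0 addr0.
have nP : cong M (g * pe) (- theta g) := newton_cong P M.
have nQ : cong M (h * pf) (- theta h) := newton_cong Q M.
have tgu : cong M (theta g * u + g * theta u) 0.
  by have := cong_theta hu; rewrite theta_mul theta1.
have hE' : cong M E (1 - h * u).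
  apply: (cong_rw (p' := 1 - (1 - E)) (q' := 1 - h * u)); first by ring. by [].
  by apply: cong_add; [apply: cong_refl | apply: cong_opp; apply: cong_sym].
have A2 : cong M (theta E) (- (theta h * u + h * theta u)).
  by have := cong_theta hE'; rewrite theta_add theta_opp theta1 theta_mul add0r.
have StepA : cong M (g * h * (pe - pf)) (- (g * g * theta E)).
  apply: (cong_trans (q := g * theta h * 1 + g * h * 0 - h * theta g * 1)).
    apply: (cong_rw (p' := h * (g * pe) - g * (h * pf))
                    (q' := h * (- theta g) - g * (- theta h))); try ring.
    apply: cong_add; first by apply: cong_mul => //; apply: cong_refl.
    by apply: cong_opp; apply: cong_mul => //; apply: cong_refl.
  apply: cong_sym.
  apply: (cong_trans (q := g * g * (theta h * u + h * theta u))).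
    apply: (cong_rw (p' := - (g * g * theta E))
                    (q' := - (g * g * (- (theta h * u + h * theta u))))); [by [] | by ring |].
    by apply: cong_opp; apply: cong_mul; [apply: cong_refl | exact: A2].
  apply: (cong_rw (p' := g * theta h * (g * u) + g * h * (theta g * u + g * theta u)
                          - h * theta g * (g * u))); [by ring | by [] |].
  apply: cong_add; first apply: cong_add.
  - by apply: cong_mul => //; apply: cong_refl.
  - by apply: cong_mul => //; apply: cong_refl.
  - by apply: cong_opp; apply: cong_mul => //; apply: cong_refl.
have hhuW : cong M (h * u * W) 1.
  exact: (cong_trans (cong_mul hE (cong_refl M W)) hW).
have StepB : cong M (pe - pf) (- (W * theta E)).
  apply: (cong_trans (q := (g * u) * (h * u * W) * (pe - pf))).
    apply: (cong_rw (p' := 1 * 1 * (pe - pf))); [by ring | by [] |].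
    by apply: cong_sym; apply: cong_mul; [apply: cong_mul | apply: cong_refl].
  apply: (cong_trans (q := (u * u * W) * (- (g * g * theta E)))).
    apply: (cong_rw (p' := (u * u * W) * (g * h * (pe - pf)))); [by ring | by [] |].
    by apply: cong_mul => //; apply: cong_refl.
  apply: (cong_rw (p' := - ((g * u) * (g * u) * (W * theta E)))
                  (q' := - (1 * 1 * (W * theta E)))); [by ring | by ring |].
  by apply: cong_opp; apply: cong_mul; [apply: cong_mul | apply: cong_refl].
have := cong_coef (n := N) StepB (ltnSn N).
rewrite coefB /pe /pf /ppol !coef_poly ltnSn => ->.
rewrite coefN /W mulr_suml coef_sum; apply: S_opp => //; apply: S_sum => // k.
have T : theta (E ^+ k.+1) = (E ^+ k * theta E) *+ k.+1.
  by rewrite /theta deriv_exp /= mulrnAr; congr (_ *+ _); ring.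
have := congr1 (fun q : {poly A} => q`_N) T; rewrite /= coef_theta coefMn.
have [y hy ->] := pow_S pp hL hdp EI (k := k.+1) isT N.
move=> Ex; exists (y *+ k`!); first exact: I_mulrn.
apply/eqP; rewrite -subr_eq0; apply/eqP; apply: (hT k.+1) => //.
rewrite mulrnBl -Ex -!mulrnA; apply/eqP; rewrite subr_eq0; apply/eqP.
congr (_ *+ _); rewrite factS; ring.
Qed.
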